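(* Let $G$ be a loopless multigraph, $k\ge1$, $M$ a maximal $k$-edge-colorable subgraph of $G$, $\psi$ a proper $k$-edge-coloring of $M$, and $y\in V(G)$ with $d_M(y)<k$. Then for all distinct $w,z \in N_M(y) \cup \{y\}$, we have $C(w) \cap C(z) = \emptyset$.
   Context: $\mu_G(v,w)$ (resp. $\mu_M(v,w)$) is the number of edges of $G$ (resp. $M$) joining $v,w$; $d_M(v)$ is the number of $M$-edges at $v$; $N_M(y)$ is the set of neighbors of $y$ in $M$. $F_k(y)=\{w\in N_G(y): d_M(w)\le k-\mu_G(y,w)\}$ and $U_k(y)=\{w\in F_k(y): \mu_M(y,w)<\mu_G(y,w)\}$. For distinct vertices $w,z$, $\psi(w,z)$ is the set of colors used by $\psi$ on edges of $M$ joining $w$ and $z$; $\psi(w)$ is the set of colors on $M$-edges incident to $w$; $O(w)=\{1,\dots,k\}\setminus\psi(w)$. For each $u\in U_k(y)$, $H_u$ is the multidigraph on vertex set $N_M(y)\cup\{u\}$ in which the number of arcs from $w$ to $z$ is $|O(w)\cap\psi(y,z)|$. A vertex $z\in N_M(y)$ is remote if for every $u\in U_k(y)$, $z$ is not reachable from $u$ by a directed path in $H_u$. For $w\in U_k(y)\cup N_M(y)\cup\{y\}$: $C(w)=\psi(y,w)$ if $w$ is remote, and $C(w)=O(w)$ otherwise (so $C(y)=O(y)$). *)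

(* Defs.v *)
From mathcomp Require Import all_boot.
Set Implicit Arguments. Unset Strict Implicit. Unset Printing Implicit Defensive.

(* A multigraph G: finite vertex type V, finite edge type E, each edge e
   joins the (unordered) pair of endpoints src e, tgt e.  All edges of E
   are edges of G.  Spanning subgraphs are given by edge sets {set E}.
   Colors are natural numbers 1..k. *)
Section Multigraph.
Variables (V E : finType) (src tgt : E -> V).

Definition loopless : Prop := forall e, src e != tgt e.

Definition joins (e : E) (v w : V) : bool :=
  ((src e == v) && (tgt e == w)) || ((src e == w) && (tgt e == v)).
Definition incident (e : E) (v : V) : bool := (src e == v) || (tgt e == v).
Definition adjacent_edges (e f : E) : bool :=
  [exists v, incident e v && incident f v].

Definition mu (F : {set E}) (v w : V) : nat := #|[set e in F | joins e v w]|.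
Definition deg (F : {set E}) (v : V) : nat := #|[set e in F | incident e v]|.
Definition nbhd (F : {set E}) (v : V) : {set V} :=
  [set w | [exists e in F, joins e v w]].

Definition proper_coloring (k : nat) (F : {set E}) (phi : E -> nat) : Prop :=
  (forall e, e \in F -> 0 < phi e <= k) /\
  (forall e f, e \in F -> f \in F -> e != f -> adjacent_edges e f ->
     phi e != phi f).
Definition k_edge_colorable (k : nat) (F : {set E}) : Prop :=
  exists phi, proper_coloring k F phi.
Definition maximal_k_colorable (k : nat) (M : {set E}) : Prop :=
  k_edge_colorable k M /\
  forall F : {set E}, M \proper F -> ~ k_edge_colorable k F.

Section Fan.
Variables (k : nat) (M : {set E}) (psi : E -> nat) (y : V).

Definition muG := mu [set: E].
Definition muM := mu M.
Definition dM := deg M.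
Definition NG := nbhd [set: E].
Definition NM := nbhd M.

(* F_k(y): d_M(w) <= k - mu_G(y,w), stated over the integers *)
Definition Fk : {set V} := [set w in NG y | dM w + muG y w <= k].
Definition Uk : {set V} := [set w in Fk | muM y w < muG y w].

Definition psi2 (w z : V) : pred nat :=
  fun c => [exists e in M, joins e w z && (psi e == c)].
Definition psi1 (w : V) : pred nat :=
  fun c => [exists e in M, incident e w && (psi e == c)].
Definition Omiss (w : V) : pred nat :=
  fun c => (0 < c <= k) && ~~ psi1 w c.

Definition Hverts (u : V) : {set V} := u |: NM y.
Definition Harc (u : V) : rel V :=
  fun w z => [&& w \in Hverts u, z \in Hverts u &
                has (fun c => Omiss w c && psi2 y z c) (iota 1 k)].

Definition remote (z : V) : bool :=
  (z \in NM y) && [forall u in Uk, ~~ connect (Harc u) u z].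

Definition Ccol (w : V) : pred nat :=
  if remote w then psi2 y w else Omiss w.

End Fan.
End Multigraph.

(* Main.v *)
Require Import Defs.
From mathcomp Require Import all_boot zify.
Set Implicit Arguments. Unset Strict Implicit. Unset Printing Implicit Defensive.

Lemma joins_sym (V E : finType) (src tgt : E -> V) e v w :
  joins src tgt e v w = joins src tgt e w v.
Proof. by rewrite /joins orbC. Qed.

Lemma joins_inc (V E : finType) (src tgt : E -> V) e v w :
  joins src tgt e v w -> incident src tgt e v && incident src tgt e w.
Proof.
by rewrite /joins /incident => /orP[/andP[/eqP-> /eqP->]|/andP[/eqP-> /eqP->]];
  rewrite !eqxx ?orbT.
Qed.

Lemma joins_uniq (V E : finType) (src tgt : E -> V) e v w w' :
  loopless src tgt -> joins src tgt e v w -> joins src tgt e v w' -> w = w'.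
Proof.
move=> ll; have := ll e; rewrite /joins => H.
case/orP=> /andP[/eqP s1 /eqP t1]; case/orP=> /andP[/eqP s2 /eqP t2];
 subst => //; by rewrite ?s2 ?t2 ?s1 ?t1 eqxx in H.
Qed.

Lemma joins_ne (V E : finType) (src tgt : E -> V) e v w :
  loopless src tgt -> joins src tgt e v w -> v != w.
Proof.
move=> ll; have := ll e; rewrite /joins => H.
by case/orP=> /andP[/eqP <- /eqP <-] //; rewrite eq_sym.
Qed.

Lemma NM_ne (V E : finType) (src tgt : E -> V) M y w :
  loopless src tgt -> w \in NM src tgt M y -> w != y.
Proof.
move=> ll; rewrite /NM /nbhd inE => /existsP[e /andP[_ J]].
by rewrite eq_sym; apply: joins_ne J.
Qed.

Lemma Uk_ne (V E : finType) (src tgt : E -> V) k M y u :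
  loopless src tgt -> u \in Uk src tgt k M y -> u != y.
Proof.
move=> ll; rewrite /Uk /Fk !inE => /andP[/andP[H _] _].
move: H => /existsP[e /andP[_ J]].
by rewrite eq_sym; apply: joins_ne J.
Qed.

Lemma Hverts_ne (V E : finType) (src tgt : E -> V) k M y u x :
  loopless src tgt -> u \in Uk src tgt k M y -> x \in Hverts src tgt M y u -> x != y.
Proof.
move=> ll Hu; rewrite /Hverts in_setU1 => /orP[/eqP->|H]; first exact: Uk_ne Hu.
exact: NM_ne ll H.
Qed.

Lemma proper_inj (V E : finType) (src tgt : E -> V) k M psi e f v :
  proper_coloring src tgt k M psi -> e \in M -> f \in M ->
  incident src tgt e v -> incident src tgt f v -> psi e = psi f -> e = f.
Proof.
move=> [_ P] eM fM ie if_ Hc; apply/eqP; apply/negPn/negP => ne.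
have: adjacent_edges src tgt e f by apply/existsP; exists v; rewrite ie.
by move=> /(P e f eM fM ne); rewrite Hc eqxx.
Qed.

Lemma inc_joins (V E : finType) (src tgt : E -> V) e a b x :
  joins src tgt e a b -> incident src tgt e x -> x = a \/ x = b.
Proof.
rewrite /joins /incident.
by case/orP=> /andP[/eqP-> /eqP->] /orP[/eqP->|/eqP->]; auto.
Qed.

Definition recol (E : finType) (psi : E -> nat) (e0 : E) (c : nat) :=
  fun e => if e == e0 then c else psi e.

Lemma recolor (V E : finType) (src tgt : E -> V) k M psi e0 a b c :
  proper_coloring src tgt k M psi -> joins src tgt e0 a b ->
  Omiss src tgt k M psi a c -> Omiss src tgt k M psi b c ->
  proper_coloring src tgt k (e0 |: M) (recol psi e0 c).
Proof.
move=> [Pc Pa] J /andP[ck Ha] /andP[_ Hb]; split.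
  move=> e; rewrite in_setU1 /recol; case: eqP => [_ _|_ /= eM]; first by [].
  exact: Pc.
have key: forall f, f \in M -> f != e0 -> adjacent_edges src tgt e0 f -> psi f != c.
  move=> f fM ne /existsP[v /andP[i0 iF]]; apply/eqP => Hf.
  case: (inc_joins J i0) => ?; subst v.
    by move/negP: Ha; apply; apply/existsP; exists f; rewrite fM iF Hf eqxx.
  by move/negP: Hb; apply; apply/existsP; exists f; rewrite fM iF Hf eqxx.
move=> e f; rewrite !in_setU1 /recol => He Hf.
case: (eqVneq e e0) He => [->|ee0] /= He; case: (eqVneq f e0) Hf => [->|fe0] /= Hf => ne adj.
- by [].
- by rewrite eq_sym; apply: key => //.
- apply: key => //.
  by move: adj => /existsP[v /andP[x1 x2]]; apply/existsP; exists v; rewrite x1 x2.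
- exact: Pa.
Qed.

Lemma psi1_recol (V E : finType) (src tgt : E -> V) M psi em c x d :
  ~~ incident src tgt em x ->
  psi1 src tgt M (recol psi em c) x d = psi1 src tgt M psi x d.
Proof.
move=> ni; rewrite /psi1; apply: eq_existsb => f; rewrite /recol.
case: (eqVneq f em) => [->|//]; by rewrite (negbTE ni) andbF.
Qed.

Lemma psi2_recol (V E : finType) (src tgt : E -> V) M psi em c a b b' d :
  loopless src tgt -> joins src tgt em a b -> b' != b ->
  psi2 src tgt M (recol psi em c) a b' d = psi2 src tgt M psi a b' d.
Proof.
move=> ll J ne; rewrite /psi2; apply: eq_existsb => f; rewrite /recol.
case: (eqVneq f em) => [->|//]; case Jb: (joins src tgt em a b') => //=.
by rewrite (joins_uniq ll J Jb) eqxx in ne.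
Qed.

Lemma card_lt_witness (E : finType) (A : {set E}) (P : pred E) :
  #|[set e in A | P e]| < #|[set e in [set: E] | P e]| ->
  exists e, P e && (e \notin A).
Proof.
move=> H; case: (boolP [exists e, P e && (e \notin A)]) => [/existsP//|/existsPn N].
suff Eq: [set e in A | P e] = [set e in [set: E] | P e] by rewrite Eq ltnn in H.
apply/setP => e; rewrite !inE; case Pe: (P e); rewrite ?andbF ?andbT //.
by have := N e; rewrite Pe /= negbK.
Qed.

Lemma fanA (V E : finType) (src tgt : E -> V) k M y u :
  loopless src tgt -> maximal_k_colorable src tgt k M ->
  u \in Uk src tgt k M y ->
  forall p psi, proper_coloring src tgt k M psi ->
  path (Harc src tgt k M psi y u) u p -> uniq (u :: p) ->
  forall c, Omiss src tgt k M psi y c -> Omiss src tgt k M psi (last u p) c -> False.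
Proof.
move=> ll [_ Mmax] Hu p; elim/last_ind: p => [|q z IH] psi Ppsi Hp Hun c Oy Oz.
  move: (Hu); rewrite /Uk inE => /andP[_ Hlt].
  have [e0 /andP[J0 e0M]] := card_lt_witness Hlt.
  apply: (Mmax (e0 |: M)); first by rewrite properUr // sub1set.
  by exists (recol psi e0 c); apply: recolor Ppsi J0 Oy Oz.
move: Hp; rewrite rcons_path => /andP[Hq Hlast].
move: Hun; rewrite -rcons_cons rcons_uniq => /andP[zq Huq].
rewrite last_rcons in Oz.
set x := last u q in Hlast.
have xq : x \in u :: q by rewrite /x mem_last.
move: Hlast; rewrite /Harc => /and3P[xH zH /hasP[c' _ /andP[Ox Pyz]]].
move: (Pyz) => /existsP[em /and3P[emM Jm /eqP pem]].
have Ppsi' := recolor Ppsi Jm Oy Oz.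
have EqM : em |: M = M.
  by apply/setP => f; rewrite in_setU1; case: eqP => // ->; rewrite emM.
rewrite EqM in Ppsi'.
have cc' : c != c'.
  apply/eqP => E1; move/andP: Oy => [_ /negP]; apply; apply/existsP; exists em.
  by rewrite emM E1 pem eqxx (proj1 (andP (joins_inc Jm))).
have yne : forall v, v \in u :: q -> v != y.
  move=> v vq; apply: (Hverts_ne ll Hu).
  move: vq; rewrite inE => /orP[/eqP->|vq]; first by rewrite /Hverts setU11.
  move: Hq => /(pathP u) Hq. move: vq => /(nthP u)[i iq <-].
  have := Hq i iq; rewrite /Harc => /and3P[_ ->] //.
have notinc : forall v, v \in u :: q -> ~~ incident src tgt em v.
  move=> v vq; apply/negP => iv; case: (inc_joins Jm iv) => ?; subst v.
    by move: (yne y vq); rewrite eqxx.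
  by rewrite vq in zq.
apply: (IH (recol psi em c) Ppsi' _ Huq c').
- apply: (sub_in_path (P := mem (u :: q))) Hq; last first.
    by apply/allP => v.
  move=> a b aq bq; rewrite /Harc => /and3P[aH bH /hasP[d dI /andP[Oa Pab]]].
  rewrite aH bH /=; apply/hasP; exists d => //.
  rewrite /Omiss psi1_recol ?notinc //.
  rewrite (@psi2_recol _ _ src tgt M psi em c y z b d ll Jm) //; last by apply/eqP => bz; rewrite -bz bq in zq.
  by move: Oa; rewrite /Omiss => ->.
- rewrite /Omiss; move/andP: Ox => [-> _] /=; apply/negP => /existsP[f /and3P[fM iy /eqP pf]].
  move: pf; rewrite /recol; case: eqP => [_ /eqP|fe pf].
    by rewrite (negbTE cc').
  apply: fe; apply: (proper_inj Ppsi fM emM iy (proj1 (andP (joins_inc Jm)))).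
  by rewrite pf pem.
- by rewrite /Omiss psi1_recol ?notinc //.
Qed.

Lemma fanA2 (V E : finType) (src tgt : E -> V) k M y u psi z c :
  loopless src tgt -> maximal_k_colorable src tgt k M ->
  u \in Uk src tgt k M y -> proper_coloring src tgt k M psi ->
  connect (Harc src tgt k M psi y u) u z ->
  Omiss src tgt k M psi y c -> Omiss src tgt k M psi z c -> False.
Proof.
move=> ll mx Hu Pp /connectP[p Hp ->] Oy.
case: (shortenP Hp) => p' Hp' Hu' _ Oz.
exact: (fanA ll mx Hu Pp Hp' Hu' Oy Oz).
Qed.

Definition ab_edge (E : finType) (M : {set E}) (psi : E -> nat) (al be : nat) e :=
  (e \in M) && ((psi e == al) || (psi e == be)).

Definition abrel (V E : finType) (src tgt : E -> V) M psi al be : rel V :=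
  fun a b => [exists e, ab_edge M psi al be e && joins src tgt e a b].

Definition comp (V E : finType) (src tgt : E -> V) M psi al be x0 : {set V} :=
  [set x | connect (abrel src tgt M psi al be) x0 x].

Definition swapc (V E : finType) (src tgt : E -> V) M psi al be (K : {set V}) :=
  fun e => if ab_edge M psi al be e && (src e \in K) then
             (if psi e == al then be else al) else psi e.

Lemma comp_closed (V E : finType) (src tgt : E -> V) M psi al be x0 e :
  ab_edge M psi al be e ->
  (src e \in comp src tgt M psi al be x0) = (tgt e \in comp src tgt M psi al be x0).
Proof.
move=> ab; rewrite !inE.
have r1 : abrel src tgt M psi al be (src e) (tgt e).
  by apply/existsP; exists e; rewrite ab /joins !eqxx.
have r2 : abrel src tgt M psi al be (tgt e) (src e).
  by apply/existsP; exists e; rewrite ab /joins !eqxx orbT.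
apply/idP/idP => H; apply: connect_trans H _; exact: connect1.
Qed.

Lemma comp_inc (V E : finType) (src tgt : E -> V) M psi al be x0 e v :
  ab_edge M psi al be e -> incident src tgt e v ->
  v \in comp src tgt M psi al be x0 -> src e \in comp src tgt M psi al be x0.
Proof.
move=> ab; rewrite /incident => /orP[/eqP->//|/eqP<-].
by rewrite (comp_closed _ _ x0 ab).
Qed.

Lemma swap_out (V E : finType) (src tgt : E -> V) M psi al be x0 e v :
  incident src tgt e v -> v \notin comp src tgt M psi al be x0 ->
  swapc src tgt M psi al be (comp src tgt M psi al be x0) e = psi e.
Proof.
move=> ie vK; rewrite /swapc; case ab: (ab_edge M psi al be e) => //=.
case sK: (src e \in _) => //.
move: ie; rewrite /incident => /orP[/eqP Hs|/eqP Ht].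
  by move: vK; rewrite -Hs sK.
by move: vK; rewrite -Ht -(comp_closed _ _ x0 ab) sK.
Qed.

Lemma swap_other (V E : finType) (src tgt : E -> V) (M : {set E}) (psi : E -> nat)
  (al be : nat) (K : {set V}) (e : E) (d : nat) :
  e \in M -> d != al -> d != be ->
  (swapc src tgt M psi al be K e == d) = (psi e == d).
Proof.
move=> eM da db; rewrite /swapc /ab_edge eM /=.
have ad : (al == d) = false by rewrite eq_sym (negbTE da).
have bd : (be == d) = false by rewrite eq_sym (negbTE db).
case: (eqVneq (psi e) al) => [->|_] /=.
  by case: ifP => _; rewrite ?ad ?bd.
case: (eqVneq (psi e) be) => [->|_] //=.
by case: ifP => _; rewrite ?ad ?bd.
Qed.

Lemma swap_proper (V E : finType) (src tgt : E -> V) k M psi al be x0 :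
  proper_coloring src tgt k M psi -> 0 < al <= k -> 0 < be <= k ->
  proper_coloring src tgt k M
    (swapc src tgt M psi al be (comp src tgt M psi al be x0)).
Proof.
move=> [Pc Pa] ak bk; split.
  by move=> e eM; rewrite /swapc; case: ifP => _ //; [case: ifP | exact: Pc].
move=> e f eM fM ne adj.
have Hpf := Pa e f eM fM ne adj.
move: (adj) => /existsP[v /andP[ie if_]].
set K := comp src tgt M psi al be x0.
rewrite /swapc.
case te: (ab_edge M psi al be e && (src e \in K));
case tf: (ab_edge M psi al be f && (src f \in K)).
- move: te tf => /andP[/andP[_ he] _] /andP[/andP[_ hf] _].
  move: Hpf; case/orP: he => /eqP->; case/orP: hf => /eqP->;
  case: (eqVneq be al) => [->|nba]; rewrite ?eqxx //= ?(negbTE nba) //.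
  by rewrite eq_sym.
- move: te => /andP[abe sK].
  have vK : v \in K.
    move: ie; rewrite /incident => /orP[/eqP<-//|/eqP<-].
    by rewrite /K -(comp_closed _ _ x0 abe).
  case abf: (ab_edge M psi al be f).
    by have := comp_inc abf if_ vK; rewrite -/K; rewrite abf /= in tf; rewrite tf.
  move: abf; rewrite /ab_edge fM /= => /norP[/negbTE fa /negbTE fb].
  by case: ifP => _; rewrite eq_sym ?fa ?fb.
- move: tf => /andP[abf sK].
  have vK : v \in K.
    move: if_; rewrite /incident => /orP[/eqP<-//|/eqP<-].
    by rewrite /K -(comp_closed _ _ x0 abf).
  case abe: (ab_edge M psi al be e).
    by have := comp_inc abe ie vK; rewrite -/K; rewrite abe /= in te; rewrite te.
  move: abe; rewrite /ab_edge eM /= => /norP[/negbTE ea /negbTE eb].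
  by case: ifP => _; rewrite ?ea ?eb.
- exact: Hpf.
Qed.


Lemma swap_psi1_other (V E : finType) (src tgt : E -> V) (M : {set E}) psi al be K v d :
  d != al -> d != be ->
  psi1 src tgt M (swapc src tgt M psi al be K) v d = psi1 src tgt M psi v d.
Proof.
move=> da db; rewrite /psi1; apply: eq_existsb => f.
case fM: (f \in M) => //=; by rewrite swap_other.
Qed.

Lemma swap_psi2_other (V E : finType) (src tgt : E -> V) (M : {set E}) psi al be K a b d :
  d != al -> d != be ->
  psi2 src tgt M (swapc src tgt M psi al be K) a b d = psi2 src tgt M psi a b d.
Proof.
move=> da db; rewrite /psi2; apply: eq_existsb => f.
case fM: (f \in M) => //=; by rewrite swap_other.
Qed.

Lemma swap_psi1_out (V E : finType) (src tgt : E -> V) (M : {set E}) psi al be x0 v d :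
  v \notin comp src tgt M psi al be x0 ->
  psi1 src tgt M (swapc src tgt M psi al be (comp src tgt M psi al be x0)) v d =
  psi1 src tgt M psi v d.
Proof.
move=> vK; rewrite /psi1; apply: eq_existsb => f.
case iv: (incident src tgt f v); last by rewrite !andbF.
by rewrite (swap_out iv vK).
Qed.

Lemma swap_psi2_out (V E : finType) (src tgt : E -> V) (M : {set E}) psi al be x0 a b d :
  a \notin comp src tgt M psi al be x0 ->
  psi2 src tgt M (swapc src tgt M psi al be (comp src tgt M psi al be x0)) a b d =
  psi2 src tgt M psi a b d.
Proof.
move=> aK; rewrite /psi2; apply: eq_existsb => f.
case J: (joins src tgt f a b); last by rewrite !andbF.
have iv := proj1 (andP (joins_inc J)).
by rewrite (swap_out iv aK).
Qed.

Lemma swap_good (V E : finType) (src tgt : E -> V) (M : {set E}) psi al be x0 v :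
  v \in comp src tgt M psi al be x0 -> ~~ psi1 src tgt M psi v al ->
  ~~ psi1 src tgt M (swapc src tgt M psi al be (comp src tgt M psi al be x0)) v be.
Proof.
move=> vK Na; apply/negP => /existsP[f /and3P[fM iv /eqP pf]].
move/negP: Na; apply; apply/existsP; exists f; rewrite fM iv /=.
move: pf; rewrite /swapc.
case te: (ab_edge M psi al be f && _).
  move: te => /andP[/andP[_ H] _].
  case: (eqVneq (psi f) al) => //= ne Eab.
  by move: H; rewrite (negbTE ne) /= -Eab (negbTE ne).
move=> pfb; have abf : ab_edge M psi al be f by rewrite /ab_edge fM pfb eqxx orbT.
by rewrite abf (comp_inc abf iv vK) in te.
Qed.

Lemma psi2_psi1 (V E : finType) (src tgt : E -> V) (M : {set E}) psi a b c :
  psi2 src tgt M psi a b c -> psi1 src tgt M psi a c.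
Proof.
move=> /existsP[f /and3P[fM J pc]]; apply/existsP; exists f.
by rewrite fM (proj1 (andP (joins_inc J))).
Qed.

Lemma lemC (V E : finType) (src tgt : E -> V) k (M : {set E}) psi y u al be x0 :
  let K := comp src tgt M psi al be x0 in
  let psi' := swapc src tgt M psi al be K in
  y \notin K -> Omiss src tgt k M psi y be ->
  forall p s, path (Harc src tgt k M psi y u) s p ->
  Omiss src tgt k M psi' (last s p) be ->
  exists2 a, connect (Harc src tgt k M psi' y u) s a & Omiss src tgt k M psi' a be.
Proof.
move=> K psi' yK Oy p; elim: p => [|b q IH] s /=.
  by move=> _ G; exists s.
move=> /andP[Hsb Hq] Hl; have [a Ca Ga] := IH b Hq Hl.
move: Hsb; rewrite /Harc => /and3P[sH bH /hasP[c cI /andP[Os Pb]]].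
have cbe : c != be.
  apply/eqP => E1; move: Oy => /andP[_ /negP]; apply; rewrite -E1.
  exact: psi2_psi1 Pb.
have arc : (c == al) && (s \in K) = false ->
    Harc src tgt k M psi' y u s b.
  move=> H; rewrite /Harc sH bH /=; apply/hasP; exists c => //.
  case: (eqVneq c al) H => [E1|cal] /= H.
    subst c; rewrite /psi' /K /Omiss swap_psi2_out // swap_psi1_out ?H //.
    by rewrite Pb andbT; exact: Os.
  rewrite /psi' /Omiss swap_psi1_other // swap_psi2_other // Pb andbT; exact: Os.
case H: ((c == al) && (s \in K)).
  move: H => /andP[/eqP E1 sK]; subst c.
  exists s => //; rewrite /Omiss.
  move: Oy => /andP[-> _] /=.
  by apply: swap_good sK _; move: Os => /andP[_].
exists a => //; apply: connect_trans Ca; apply: connect1; exact: arc.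
Qed.

Lemma kempe (V E : finType) (src tgt : E -> V) k M y u psi z al be x0 :
  loopless src tgt -> maximal_k_colorable src tgt k M ->
  u \in Uk src tgt k M y -> proper_coloring src tgt k M psi ->
  Omiss src tgt k M psi y be -> Omiss src tgt k M psi z al ->
  connect (Harc src tgt k M psi y u) u z ->
  z \in comp src tgt M psi al be x0 -> y \notin comp src tgt M psi al be x0 -> False.
Proof.
move=> ll mx Hu Pp Oy Oz /connectP[p Hp Ez] zK yK.
have Pp' := swap_proper x0 Pp (proj1 (andP Oz)) (proj1 (andP Oy)).
have Gz : Omiss src tgt k M (swapc src tgt M psi al be (comp src tgt M psi al be x0))
            (last u p) be.
  rewrite -Ez /Omiss (proj1 (andP Oy)) /=.
  by apply: swap_good zK _; move: Oz => /andP[_].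
have [a Ca Ga] := lemC yK Oy Hp Gz.
apply: (fanA2 ll mx Hu Pp' Ca _ Ga).
rewrite /Omiss (proj1 (andP Oy)) /= swap_psi1_out //.
by move: Oy => /andP[_].
Qed.

Definition Aset (V E : finType) (src tgt : E -> V) M psi al be (S : {set V}) : {set E} :=
  [set e | ab_edge M psi al be e && (src e \in S) && (tgt e \in S)].

Lemma boundary (V : finType) (r : rel V) (S : {set V}) p s :
  path r s p -> s \in S -> last s p \notin S ->
  exists a b, [/\ a \in S, b \notin S, r a b & a \in s :: p].
Proof.
elim: p s => [|b q IH] s /=; first by move=> _ ->.
move=> /andP[rsb Hq] sS Hl; case bS: (b \in S).
  have [a [c [H1 H2 H3 H4]]] := IH b Hq bS Hl.
  by exists a, c; split => //; rewrite inE H4 orbT.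
by exists s, b; rewrite bS rsb inE eqxx.
Qed.

Lemma ar1 a b c d : a <= b -> b <= c + 1 -> c <= d -> a <= d + 1. Proof. lia. Qed.
Lemma ar2 a b n : a <= b -> a - b <= n. Proof. lia. Qed.
Lemma ar3 a b : b < a -> a <= b -> False. Proof. lia. Qed.
Lemma ar4 b c c' : b <= c + 1 -> c < c' -> 1 + b <= c' + 1. Proof. lia. Qed.
Lemma ar5 a b n : a - b <= n.+1 -> b < a -> a - (1 + b) <= n. Proof. lia. Qed.

Lemma grow (V E : finType) (src tgt : E -> V) M psi al be x0 :
  let K := comp src tgt M psi al be x0 in
  forall n (S : {set V}), x0 \in S -> S \subset K ->
  #|S| <= #|Aset src tgt M psi al be S| + 1 -> #|K| - #|S| <= n ->
  #|K| <= #|[set e | ab_edge M psi al be e && (src e \in K)]| + 1.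
Proof.
move=> K n; elim: n => [|n IH] S x0S SK HS Hn.
  have h1 : #|K| <= #|S| by rewrite -subn_eq0 -leqn0.
  have h2 : #|Aset src tgt M psi al be S| <=
            #|[set e | ab_edge M psi al be e && (src e \in K)]|.
    apply: subset_leq_card; apply/subsetP => e; rewrite /Aset inE.
    move=> /andP[/andP[ab sS] _]; rewrite inE ab /=; exact: (subsetP SK).
  exact: ar1 h1 HS h2.
case: (leqP #|K| #|S|) => hKS.
  by apply: (IH S) => //; apply: ar2.
have [x xK xS] : exists2 x, x \in K & x \notin S.
  apply/subsetPn; apply/negP => KS; exact: ar3 hKS (subset_leq_card KS).
have := xK; rewrite /K inE => /connectP[p Hp Ex].
have x0K : x0 \in K by rewrite inE connect0.
have xS' : last x0 p \notin S by rewrite -Ex.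
have [a [b [aS bS rab _]]] := boundary Hp x0S xS'.
have aK : a \in K := subsetP SK a aS.
have bK : b \in K.
  move: aK; rewrite /K !inE => ca; apply: connect_trans ca _; exact: connect1.
move: rab => /existsP[e /andP[abe Je]].
apply: (IH (b |: S)).
- by rewrite in_setU1 x0S orbT.
- by rewrite subUset sub1set bK SK.
- rewrite cardsU1 bS.
  have : #|Aset src tgt M psi al be S| < #|Aset src tgt M psi al be (b |: S)|.
    apply: proper_card; rewrite properEneq; apply/andP; split.
      apply/eqP => Eq.
      have : e \in Aset src tgt M psi al be (b |: S).
        rewrite /Aset inE abe /=.
        move: Je; rewrite /joins => /orP[/andP[/eqP-> /eqP->]|/andP[/eqP-> /eqP->]];
          by rewrite !in_setU1 aS eqxx !orbT.
      rewrite -Eq /Aset inE => /andP[/andP[_ h1] h2].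
      move: Je; rewrite /joins => /orP[/andP[_ /eqP Ht]|/andP[/eqP Hs _]].
        by move: bS; rewrite -Ht h2.
      by move: bS; rewrite -Hs h1.
    apply/subsetP => f; rewrite /Aset !inE => /andP[/andP[-> h1] h2].
    by rewrite h1 h2 !orbT.
  exact: ar4.
- rewrite cardsU1 bS; exact: ar5.
Qed.

Definition degab (V E : finType) (src tgt : E -> V) M psi al be v :=
  #|[set e | ab_edge M psi al be e && incident src tgt e v]|.

Lemma col_le1 (V E : finType) (src tgt : E -> V) k M psi v c :
  proper_coloring src tgt k M psi ->
  #|[set e | (e \in M) && (psi e == c) && incident src tgt e v]| <= 1.
Proof.
move=> Pp; apply/card_le1_eqP => e f; rewrite !inE.
move=> /andP[/andP[eM /eqP pe] ie] /andP[/andP[fM /eqP pf] if_].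
by apply: (proper_inj Pp fM eM if_ ie); rewrite pe pf.
Qed.

Lemma col_0 (V E : finType) (src tgt : E -> V) (M : {set E}) psi v c :
  ~~ psi1 src tgt M psi v c ->
  #|[set e | (e \in M) && (psi e == c) && incident src tgt e v]| = 0.
Proof.
move=> N; apply/eqP; rewrite cards_eq0; apply/eqP/setP => e; rewrite !inE.
apply/negP => /andP[/andP[eM pe] ie]; move/negP: N; apply.
by apply/existsP; exists e; rewrite eM ie pe.
Qed.

Lemma degab_split (V E : finType) (src tgt : E -> V) (M : {set E}) psi al be v :
  degab src tgt M psi al be v <=
  #|[set e | (e \in M) && (psi e == al) && incident src tgt e v]| +
  #|[set e | (e \in M) && (psi e == be) && incident src tgt e v]|.
Proof.
rewrite /degab; set A := [set e | _ && (psi e == al) && _].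
set B := [set e | _ && (psi e == be) && _].
have -> : [set e | ab_edge M psi al be e && incident src tgt e v] = A :|: B.
  apply/setP => e; rewrite !inE /ab_edge.
  by case: (e \in M); case: (psi e == al); case: (psi e == be); case: incident.
by rewrite cardsU leq_subr.
Qed.

Lemma ar6 d a b : d <= a + b -> a <= 1 -> b <= 1 -> d <= 2. Proof. lia. Qed.
Lemma ar7 d b : d <= 0 + b -> b <= 1 -> d + 1 <= 2. Proof. lia. Qed.
Lemma ar8 d a : d <= a + 0 -> a <= 1 -> d + 1 <= 2. Proof. lia. Qed.

Lemma degab_le (V E : finType) (src tgt : E -> V) k M psi al be v :
  proper_coloring src tgt k M psi ->
  degab src tgt M psi al be v + (~~ psi1 src tgt M psi v al || ~~ psi1 src tgt M psi v be) <= 2.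
Proof.
move=> Pp; have H := degab_split src tgt M psi al be v.
have h1 := col_le1 v al Pp; have h2 := col_le1 v be Pp.
case: (boolP (psi1 src tgt M psi v al)) => Ha; case: (boolP (psi1 src tgt M psi v be)) => Hb /=.
- rewrite addn0; exact: ar6 H h1 h2.
- rewrite (col_0 Hb) in H; exact: ar8 H h1.
- rewrite (col_0 Ha) in H; exact: ar7 H h2.
- rewrite (col_0 Hb) in H; exact: ar8 H h1.
Qed.

Lemma card_sum (T : finType) (A : {set T}) (P : pred T) :
  #|[set e in A | P e]| = \sum_(e in A) (P e : nat).
Proof.
rewrite -sum1_card big_mkcond [RHS]big_mkcond /=.
by apply: eq_bigr => e _; rewrite !inE; case: (e \in A); case: (P e).
Qed.

Lemma handshake (V E : finType) (src tgt : E -> V) (M : {set E}) psi al be x0 :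
  loopless src tgt ->
  \sum_(v in comp src tgt M psi al be x0) degab src tgt M psi al be v =
  #|[set e | ab_edge M psi al be e && (src e \in comp src tgt M psi al be x0)]| * 2.
Proof.
move=> ll; set K := comp src tgt M psi al be x0.
set A := [set e | ab_edge M psi al be e && (src e \in K)].
rewrite (eq_bigr (fun v => \sum_(e in A) (incident src tgt e v : nat))); last first.
  move=> v vK; rewrite /degab -card_sum; apply: eq_card => e; rewrite !inE.
  case ab: (ab_edge M psi al be e) => //=; case iv: (incident src tgt e v);
    rewrite ?andbF ?andbT //.
  by have := comp_inc ab iv vK; rewrite inE => ->.
rewrite exchange_big /= -sum_nat_const; apply: eq_bigr => e eA.
rewrite -card_sum.
have [ab sK] : ab_edge M psi al be e /\ src e \in K by move: eA; rewrite inE => /andP.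
have tK : tgt e \in K by rewrite /K -(comp_closed _ _ x0 ab).
have -> : [set v in K | incident src tgt e v] = [set src e; tgt e].
  apply/setP => v; rewrite in_set in_set2 /incident.
  case: (eqVneq v (src e)) => [->|ns]; first by rewrite sK.
  case: (eqVneq v (tgt e)) => [->|nt]; first by rewrite tK.
  by rewrite /= andbF.
by rewrite cards2 (ll e).
Qed.

Lemma sum_ind (T : finType) (K : {set T}) y :
  y \in K -> \sum_(v in K) ((v == y) : nat) = 1.
Proof.
move=> yK; rewrite (bigD1 y) //= eqxx big1 // => v /andP[_ /negbTE ->] //.
Qed.

Lemma ar9 a c : a * 2 + 3 <= c * 2 -> c <= a + 1 -> False. Proof. lia. Qed.

Lemma three_leaves (V E : finType) (src tgt : E -> V) k M psi al be x0 y1 y2 y3 :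
  loopless src tgt -> proper_coloring src tgt k M psi ->
  let K := comp src tgt M psi al be x0 in
  let fl v := ~~ psi1 src tgt M psi v al || ~~ psi1 src tgt M psi v be in
  y1 \in K -> y2 \in K -> y3 \in K -> y1 != y2 -> y1 != y3 -> y2 != y3 ->
  fl y1 -> fl y2 -> fl y3 -> False.
Proof.
move=> ll Pp K fl k1 k2 k3 n12 n13 n23 f1 f2 f3.
have x0K : x0 \in K by rewrite inE connect0.
have Hg := @grow V E src tgt M psi al be x0 #|K| [set x0] (set11 x0).
have Hg' : #|K| <= #|[set e | ab_edge M psi al be e && (src e \in K)]| + 1.
  apply: Hg; first by rewrite sub1set.
    by rewrite cards1 addn1.
  by rewrite leq_subr.
have Hh := @handshake V E src tgt M psi al be x0 ll; rewrite -/K in Hh.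
set ind := fun v => ((v == y1) : nat) + (v == y2) + (v == y3).
have Hb : \sum_(v in K) (degab src tgt M psi al be v + ind v) <= \sum_(v in K) 2.
  apply: leq_sum => v vK; have := @degab_le V E src tgt k M psi al be v Pp; rewrite -/(fl v).
  have Hind : ind v <= fl v.
    rewrite /ind; case: (eqVneq v y1) => [->|a1].
      by rewrite (negbTE n12) (negbTE n13) f1.
    case: (eqVneq v y2) => [->|a2]; first by rewrite (negbTE n23) f2.
    by case: (eqVneq v y3) => [->|a3] //; rewrite f3.
  move=> H; apply: leq_trans H; by rewrite leq_add2l.
rewrite big_split /= Hh sum_nat_const /ind !big_split /= !sum_ind // in Hb.
exact: ar9 Hb Hg'.
Qed.

Lemma exists_missing (V E : finType) (src tgt : E -> V) k M psi y :
  dM src tgt M y < k -> exists be, Omiss src tgt k M psi y be.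
Proof.
move=> Hd.
case: (boolP (has (fun c => ~~ psi1 src tgt M psi y c) (iota 1 k))) => [/hasP[c cI Hc]|/hasPn H].
  exists c; rewrite /Omiss Hc andbT; move: cI; rewrite mem_iota add1n ltnS.
  exact: id.
exfalso.
have Hsub : {subset iota 1 k <= [seq psi e | e <- enum [set e in M | incident src tgt e y]]}.
  move=> c cI; have := H c cI; rewrite negbK => /existsP[e /and3P[eM ie /eqP pe]].
  by rewrite -pe; apply: map_f; rewrite mem_enum inE eM ie.
have := uniq_leq_size (iota_uniq 1 k) Hsub.
rewrite size_iota size_map -cardE => Hk.
have : dM src tgt M y < dM src tgt M y := leq_trans Hd Hk.
by rewrite ltnn.
Qed.

Lemma abrel_sym (V E : finType) (src tgt : E -> V) M psi al be :
  connect_sym (abrel src tgt M psi al be).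
Proof.
apply: sym_connect_sym => a b; rewrite /abrel; apply: eq_existsb => e.
by rewrite joins_sym.
Qed.

Lemma lemB (V E : finType) (src tgt : E -> V) k M psi y u1 u2 z1 z2 al :
  loopless src tgt -> maximal_k_colorable src tgt k M ->
  proper_coloring src tgt k M psi -> dM src tgt M y < k ->
  u1 \in Uk src tgt k M y -> u2 \in Uk src tgt k M y ->
  connect (Harc src tgt k M psi y u1) u1 z1 ->
  connect (Harc src tgt k M psi y u2) u2 z2 ->
  z1 != z2 -> z1 != y -> z2 != y ->
  Omiss src tgt k M psi z1 al -> Omiss src tgt k M psi z2 al -> False.
Proof.
move=> ll mx Pp Hd Hu1 Hu2 C1 C2 n12 n1y n2y O1 O2.
have [be Oy] := exists_missing psi Hd.
have c0 : forall x, x \in comp src tgt M psi al be x by move=> x; rewrite inE connect0.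
case: (boolP (y \in comp src tgt M psi al be z2)) => y2; last first.
  exact: (kempe ll mx Hu2 Pp Oy O2 C2 (c0 z2) y2).
case: (boolP (y \in comp src tgt M psi al be z1)) => y1; last first.
  exact: (kempe ll mx Hu1 Pp Oy O1 C1 (c0 z1) y1).
have k1 : z1 \in comp src tgt M psi al be y.
  by move: y1; rewrite !inE => H; rewrite abrel_sym.
have k2 : z2 \in comp src tgt M psi al be y.
  by move: y2; rewrite !inE => H; rewrite abrel_sym.
apply: (three_leaves (al := al) (be := be) ll Pp (c0 y) k1 k2).
- by rewrite eq_sym.
- by rewrite eq_sym.
- exact: n12.
- by move: Oy => /andP[_ ->]; rewrite orbT.
- by move: O1 => /andP[_ ->].
- by move: O2 => /andP[_ ->].
Qed.

Theorem mainTheorem4 (V E : finType) (src tgt : E -> V)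
  (k : nat) (M : {set E}) (psi : E -> nat) (y : V) :
  loopless src tgt ->
  1 <= k ->
  maximal_k_colorable src tgt k M ->
  proper_coloring src tgt k M psi ->
  dM src tgt M y < k ->
  forall w z : V,
    w \in y |: NM src tgt M y -> z \in y |: NM src tgt M y -> w != z ->
    forall c : nat,
      ~~ (Ccol src tgt k M psi y w c && Ccol src tgt k M psi y z c).
Proof.
move=> ll _ mx Pp Hd w z wN zN wz c; apply/negP => /andP[Cw Cz].
have nonrem : forall x, x \in NM src tgt M y -> ~~ remote src tgt k M psi y x ->
    exists2 u, u \in Uk src tgt k M y & connect (Harc src tgt k M psi y u) u x.
  move=> x xN; rewrite /remote xN /= => /forall_inPn[u uU /negbNE H].
  by exists u.
have mixed : forall a b, a \in NM src tgt M y -> b \in y |: NM src tgt M y ->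
    remote src tgt k M psi y a -> ~~ remote src tgt k M psi y b ->
    psi2 src tgt M psi y a c -> Omiss src tgt k M psi b c -> False.
  move=> a b aN bN ra nrb Pa Ob.
  move: bN; rewrite in_setU1 => /orP[/eqP Eb|bN].
    subst b; move: Ob => /andP[_ /negP]; apply; exact: psi2_psi1 Pa.
  have [u uU Cu] := nonrem b bN nrb.
  move: ra; rewrite /remote aN /= => /forall_inP/(_ u uU)/negP; apply.
  apply: connect_trans Cu _; apply: connect1.
  rewrite /Harc /Hverts !in_setU1 bN aN !orbT /=.
  apply/hasP; exists c; last by rewrite Ob Pa.
  move: Ob => /andP[/andP[c0 ck] _]; rewrite mem_iota add1n ltnS.
  by rewrite ck andbT.
move: Cw Cz; rewrite /Ccol.
case rw: (remote src tgt k M psi y w); case rz: (remote src tgt k M psi y z) => Cw Cz.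
-
  move: Cw Cz => /existsP[e /and3P[eM Je /eqP pe]] /existsP[f /and3P[fM Jf /eqP pf]].
  have ef : e = f.
    apply: (proper_inj Pp eM fM (proj1 (andP (joins_inc Je))) (proj1 (andP (joins_inc Jf)))).
    by rewrite pe pf.
  subst f; by rewrite (joins_uniq ll Je Jf) eqxx in wz.
- have wN' : w \in NM src tgt M y by move: rw; rewrite /remote => /andP[].
  exact: (mixed w z wN' zN rw (negbT rz) Cw Cz).
- have zN' : z \in NM src tgt M y by move: rz; rewrite /remote => /andP[].
  exact: (mixed z w zN' wN rz (negbT rw) Cz Cw).
- move: wN zN; rewrite !in_setU1 => /orP[/eqP Ew|wN] /orP[/eqP Ez|zN].
  + by subst; rewrite eqxx in wz.
  + subst w; have [u uU Cu] := nonrem z zN (negbT rz).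
    exact: (fanA2 ll mx uU Pp Cu Cw Cz).
  + subst z; have [u uU Cu] := nonrem w wN (negbT rw).
    exact: (fanA2 ll mx uU Pp Cu Cz Cw).
  + have [u1 uU1 Cu1] := nonrem w wN (negbT rw).
    have [u2 uU2 Cu2] := nonrem z zN (negbT rz).
    exact: (lemB ll mx Pp Hd uU1 uU2 Cu1 Cu2 wz (NM_ne ll wN) (NM_ne ll zN) Cw Cz).
Qed.
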